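(* Let $F$ be an SCF on $n$ voters and three alternatives. Then for every pair of distinct alternatives $a,b$, \[ M^{a,b}(F) \le 6 \sum_{i=1}^n M_i(F). \]
   Context: $L_3$ is the set of linear orders on three alternatives; an SCF is a map $F:(L_3)^n\to\{$alternatives$\}$. For a profile $x\in(L_3)^n$ and alternatives $a\ne b$, $x^{a,b}\in\{0,1\}^n$ is the vector with $x^{a,b}_i=1$ iff voter $i$ ranks $a$ above $b$. $M^{a,b}(F)=\Pr[F(x)=a,\ F(x')=b]$, where $x,x'$ are uniformly random profiles subject to the single restriction $x^{a,b}=x'^{a,b}$ (i.e. $x$ uniform and $x'$ uniform among profiles with the same $a$-vs-$b$ preferences). $M_i(F)$ is the probability that $x_i'$ is a profitable manipulation by voter $i$ at $x$ (i.e. voter $i$, according to $x_i$, strictly prefers $F(x_i',x_{-i})$ to $F(x)$), where $x_1,\dots,x_n,x_i'$ are independent uniform elements of $L_3$. *)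

(* Defs.v *)
From HB Require Import structures.
From mathcomp Require Import all_boot all_order all_algebra all_fingroup.
Set Implicit Arguments. Unset Strict Implicit. Unset Printing Implicit Defensive.
Import Order.TTheory GRing.Theory Num.Theory.
Local Open Scope ring_scope.

(* A linear order on the alternatives is represented by
   its rank permutation r : {perm 'I_3}; r c is the position of alternative c
   (0 = top). *)
Definition alt := 'I_3.
Definition L3 := {perm 'I_3}.
Definition above (r : L3) (c d : alt) : bool := (r c < r d)%N.

Definition profile (n : nat) := {ffun 'I_n -> L3}.
Definition SCF (n : nat) := profile n -> alt.

Definition pairvec n (x : profile n) (a b : alt) : {ffun 'I_n -> bool} :=
  [ffun i => above (x i) a b].

(* M^{a,b}(F): x uniform, x' uniform among profiles with x'^{a,b} = x^{a,b} *)
Definition Mab n (F : SCF n) (a b : alt) : rat :=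
  \sum_(x : profile n)
    (#|profile n|%:R)^-1 *
    ((#|[set x' : profile n | pairvec x' a b == pairvec x a b]|%:R)^-1 *
     (#|[set x' : profile n | (pairvec x' a b == pairvec x a b)
                                && (F x == a) && (F x' == b)]|%:R)).

Definition upd n (x : profile n) (i : 'I_n) (y : L3) : profile n :=
  [ffun j => if j == i then y else x j].

Definition Mi n (F : SCF n) (i : 'I_n) : rat :=
  (#|[set p : profile n * L3 | above (p.1 i) (F (upd p.1 i p.2)) (F p.1)]|%:R)
  / (#|profile n|%:R * #|L3|%:R).

(* Main.v *)
Require Import Defs.
From HB Require Import structures.
From mathcomp Require Import all_boot all_order all_algebra all_fingroup.
From mathcomp Require Import zify ring.
Set Implicit Arguments. Unset Strict Implicit. Unset Printing Implicit Defensive.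
Import Order.TTheory GRing.Theory Num.Theory.
Open Scope nat_scope.

Lemma sum_bool_card (T : finType) (S : {set T}) (P : pred T) :
  \sum_(q in S) (P q : nat) = #|[set q in S | P q]|.
Proof.
rewrite -sum1_card big_mkcond [RHS]big_mkcond; apply: eq_bigr => q _.
by rewrite inE; case: (q \in S); case: (P q).
Qed.

Definition row0 (S : {set L3}) (f : L3 -> alt) (p : L3) : nat :=
  \sum_(q in S) above p (f q) (f p).
Definition man0 (S : {set L3}) (f : L3 -> alt) : nat := \sum_(p in S) row0 S f p.

Lemma rank_lt3 (p : L3) (x : alt) : (p x < 3)%N.
Proof. exact: ltn_ord. Qed.

Lemma rank_inj (p : L3) (x y : alt) : (p x = p y :> nat) -> x = y.
Proof. by move=> h; apply: (@perm_inj _ p); apply: val_inj. Qed.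

Lemma row_first (S : {set L3}) (f : L3 -> alt) (u : alt) (p : L3) : (p u = 0 :> nat) -> f p != u ->
  \sum_(q in S) (f q == u : nat) <= row0 S f p.
Proof.
move=> h0 hne; apply: leq_sum => q _; case: eqP => [->|] //=.
rewrite /above.
have : (p (f p) : nat) <> p u by move=> h; rewrite (rank_inj h) eqxx in hne.
lia.
Qed.

Lemma row_last (S : {set L3}) (g : L3 -> alt) (w : alt) (p : L3) : (p w = 2 :> nat) -> g p = w ->
  \sum_(q in S) (g q != w : nat) <= row0 S g p.
Proof.
move=> h2 hgp; apply: leq_sum => q _; case: eqP => [|hne] //=.
rewrite /above hgp h2.
have := rank_lt3 p (g q).
have : (p (g q) : nat) <> 2 by move=> h; apply: hne; apply: (@rank_inj p); rewrite h h2.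
lia.
Qed.

Lemma fiber_ineq (S : {set L3}) (u w : alt) (f g : L3 -> alt) :
  u != w -> #|S| = 3 -> (forall r, r \in S -> above r u w) ->
  (\sum_(t in S) (f t == u : nat)) * (\sum_(t in S) (g t == w : nat)) <=
  3 * \sum_(t in S) ((f t == u) * (g t == w)) + man0 S f + man0 S g.
Proof.
move=> uw S3 hor.
set A := [set t in S | f t == u]; set B := [set t in S | g t == w].
have HA : \sum_(t in S) (f t == u : nat) = #|A| by rewrite sum_bool_card.
have HB : \sum_(t in S) (g t == w : nat) = #|B| by rewrite sum_bool_card.
have HAB : \sum_(t in S) ((f t == u) * (g t == w)) = #|A :&: B|.
  have -> : A :&: B = [set t in S | (f t == u) && (g t == w)].
    by apply/setP => t; rewrite !inE; case: (t \in S); case: (f t == u).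
  rewrite -sum_bool_card.
  apply: eq_bigr => t _; by case: (f t == u); case: (g t == w).
have AS : A \subset S by apply/subsetP => t; rewrite inE => /andP[].
have BS : B \subset S by apply/subsetP => t; rewrite inE => /andP[].
have HU : #|A :|: B| <= #|S| by apply: subset_leq_card; rewrite subUset AS BS.
rewrite S3 in HU.
have HUI := cardsUI A B.
have HD : #|B :\: A| = #|B| - #|A :&: B| by rewrite cardsD setIC.
have HIA : #|A :&: B| <= #|A| by apply: subset_leq_card; apply: subsetIl.
have HIB : #|A :&: B| <= #|B| by apply: subset_leq_card; apply: subsetIr.
have HCB : \sum_(t in S) (g t != w : nat) = 3 - #|B|.
  rewrite sum_bool_card.
  have -> : [set t in S | g t != w] = S :\: B.
    by apply/setP => t; rewrite !inE; case: (t \in S); case: (g t == w).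
  by rewrite cardsD (setIidPr BS) S3.
have Hman : #|B :\: A| * minn #|A| (3 - #|B|) <= man0 S f + man0 S g.
  rewrite /man0 -big_split /=.
  apply: (@leq_trans (\sum_(p in B :\: A) (row0 S f p + row0 S g p))).
    rewrite -sum_nat_const; apply: leq_sum => p.
    rewrite !inE => /andP[hpA /andP[hpS hgp]].
    have := hor p hpS; rewrite /above => hlt.
    have := rank_lt3 p w.
    case: (posnP (p u)) => [h0 _ | hpos hw3].
      have hfp : f p != u by move: hpA; rewrite hpS.
      apply: leq_trans _ (leq_addr _ _); apply: leq_trans _ (row_first S h0 hfp).
      by rewrite HA geq_minl.
    have h2 : (p w = 2 :> nat) by lia.
    apply: leq_trans _ (leq_addl _ _); apply: leq_trans _ (row_last S h2 (eqP hgp)).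
    by rewrite HCB geq_minr.
  rewrite [X in _ <= X](big_setID (B :\: A)) /=.
  have -> : S :&: (B :\: A) = B :\: A.
    apply/setIidPr; apply: subset_trans BS; exact: subsetDl.
  exact: leq_addr.
rewrite HA HB HAB.
move: Hman; rewrite HD.
case: (leqP #|A| (3 - #|B|)) => hm.
  nia.
nia.
Qed.
Lemma above_swap (r : L3) (a b : alt) : a != b -> above r b a = ~~ above r a b.
Proof.
move=> ab; rewrite /above.
have : (r a : nat) <> r b by move=> h; rewrite (rank_inj h) eqxx in ab.
lia.
Qed.

Lemma card_L3 : #|L3| = 6.
Proof. by rewrite card_Sn. Qed.

Lemma card_half (a b : alt) : a != b -> #|[set r : L3 | above r a b]| = 3.
Proof.
move=> ab; set X := [set r : L3 | above r a b].
pose phi := fun r : L3 => (tperm a b * r)%g.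
have phiinj : injective phi by move=> r s; apply: mulgI.
have phiE r : above (phi r) a b = above r b a.
  by rewrite /above /phi !permM tpermL tpermR.
have h1 : phi @: X \subset ~: X.
  apply/subsetP => s /imsetP [r]; rewrite inE => hr ->.
  by rewrite !inE phiE above_swap // hr.
have h2 : phi @: (~: X) \subset X.
  apply/subsetP => s /imsetP [r]; rewrite !inE => hr ->.
  by rewrite phiE above_swap.
have := subset_leq_card h1; rewrite card_imset //.
have := subset_leq_card h2; rewrite card_imset //.
have := cardsC X; rewrite card_L3.
move=> e1 e2 e3; have e : #|~: X| = #|X| by apply/anti_leq/andP.
rewrite e in e1; lia.
Qed.

Lemma card_half_bit (a b : alt) (c : bool) : a != b ->
  #|[set r : L3 | above r a b == c]| = 3.
Proof.
move=> ab.
have -> : [set r : L3 | above r a b == c] =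
   (if c then [set r : L3 | above r a b] else ~: [set r : L3 | above r a b]).
  by apply/setP => r; case: c; rewrite !inE ?eqb_id ?eqbF_neg.
case: c; first exact: card_half.
have := cardsC [set r : L3 | above r a b]; rewrite card_L3 card_half //.
lia.
Qed.
Definition pcons n (t : L3) (z : profile n) : profile n.+1 :=
  [ffun i => if unlift ord0 i is Some j then z j else t].
Definition ptail n (x : profile n.+1) : profile n := [ffun j => x (lift ord0 j)].

Lemma pcons0 n t (z : profile n) : pcons t z ord0 = t.
Proof. by rewrite ffunE unlift_none. Qed.
Lemma pconsS n t (z : profile n) j : pcons t z (lift ord0 j) = z j.
Proof. by rewrite ffunE liftK. Qed.
Lemma pcons_eta n (x : profile n.+1) : pcons (x ord0) (ptail x) = x.
Proof.
apply/ffunP => i; rewrite ffunE; case: unliftP => [j ->|->] //.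
by rewrite ffunE.
Qed.
Lemma ptail_pcons n t (z : profile n) : ptail (pcons t z) = z.
Proof. by apply/ffunP => j; rewrite ffunE pconsS. Qed.

Lemma sum_split n (P : pred (profile n.+1)) (H : profile n.+1 -> nat) :
  \sum_(x | P x) H x = \sum_(t : L3) \sum_(z | P (pcons t z)) H (pcons t z).
Proof.
rewrite pair_big_dep /=.
rewrite (reindex (fun p : L3 * profile n => pcons p.1 p.2)) /=.
  by apply: eq_bigl => -[t z].
exists (fun x : profile n.+1 => (x ord0, ptail x)) => [[t z] _ | x _] /=.
  by rewrite pcons0 ptail_pcons.
exact: pcons_eta.
Qed.

Lemma upd_pcons0 n t (z : profile n) y : upd (pcons t z) ord0 y = pcons y z.
Proof.
apply/ffunP => i; rewrite !ffunE; case: unliftP => [j ->|->]; last by rewrite eqxx.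
have /negbTE -> : lift ord0 j != ord0 by rewrite eq_sym neq_lift.
by [].
Qed.

Lemma upd_pconsS n t (z : profile n) j y :
  upd (pcons t z) (lift ord0 j) y = pcons t (upd z j y).
Proof.
apply/ffunP => i; rewrite !ffunE; case: unliftP => [k ->|->].
  by rewrite (inj_eq (@lift_inj _ ord0)) ffunE.
have /negbTE -> : ord0 != lift ord0 j by rewrite neq_lift.
by [].
Qed.

Definition inS n (S : 'I_n -> {set L3}) (x : profile n) : bool :=
  [forall i, x i \in S i].

Lemma inS_pcons n (S : 'I_n.+1 -> {set L3}) t z :
  inS S (pcons t z) = (t \in S ord0) && inS (fun j => S (lift ord0 j)) z.
Proof.
apply/forallP/andP => [h | [h0 /forallP h]].
  split; first by have := h ord0; rewrite pcons0.
  by apply/forallP => j; have := h (lift ord0 j); rewrite pconsS.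
move=> i; case: (unliftP ord0 i) => [j ->|->]; first by rewrite pconsS.
by rewrite pcons0.
Qed.

Lemma split_cond n (S : 'I_n.+1 -> {set L3}) (H : profile n.+1 -> nat) :
  \sum_(x | inS S x) H x =
  \sum_(t in S ord0) \sum_(z | inS (fun j => S (lift ord0 j)) z) H (pcons t z).
Proof.
rewrite sum_split [RHS]big_mkcond /=; apply: eq_bigr => t _.
under eq_bigl => z do rewrite inS_pcons.
by case: (t \in S ord0) => //=; rewrite big_pred0.
Qed.

Lemma cardS n (S : 'I_n -> {set L3}) : (forall i, #|S i| = 3) ->
  \sum_(x | inS S x) 1 = 3 ^ n.
Proof.
elim: n S => [|n IH] S h3.
  rewrite (big_pred1 ([ffun=> 1%g] : profile 0)) //= => x.
  apply/forallP/eqP => [_|_ []] //.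
  by apply/ffunP => -[].
rewrite split_cond.
under eq_bigr => t _ do rewrite IH //.
by rewrite sum_nat_const h3 expnS.
Qed.

Lemma sum_constS n (S : 'I_n -> {set L3}) c : (forall i, #|S i| = 3) ->
  \sum_(x | inS S x) c = 3 ^ n * c.
Proof. move=> h; rewrite -(cardS h) big_distrl /=; apply: eq_bigr => x _; by rewrite mul1n. Qed.

Definition orientS (a b : alt) (T : {set L3}) :=
  (forall r, r \in T -> above r a b) \/ (forall r, r \in T -> above r b a).

Definition pairsS n (S : 'I_n -> {set L3}) (G : profile n -> alt) (a b : alt) : nat :=
  \sum_(x | inS S x) \sum_(x' | inS S x') ((G x == a) * (G x' == b)).

Definition manS n (S : 'I_n -> {set L3}) (G : profile n -> alt) : nat :=
  \sum_(i < n) \sum_(x | inS S x) \sum_(y in S i) above (x i) (G (upd x i y)) (G x).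

Lemma fiber_ineq2 (S : {set L3}) (a b : alt) (f g : L3 -> alt) :
  a != b -> #|S| = 3 -> orientS a b S ->
  (\sum_(t in S) (f t == a : nat)) * (\sum_(t in S) (g t == b : nat)) <=
  3 * \sum_(t in S) ((f t == a) * (g t == b)) + man0 S f + man0 S g.
Proof.
move=> ab S3 [h|h]; first exact: fiber_ineq.
rewrite eq_sym in ab.
have := fiber_ineq g f ab S3 h.
have -> : \sum_(t in S) ((g t == b) * (f t == a)) = \sum_(t in S) ((f t == a) * (g t == b)).
  by apply: eq_bigr => t _; rewrite mulnC.
by rewrite [X in X <= _ -> _]mulnC -addnA [man0 S g + _]addnC addnA.
Qed.

Lemma core (a b : alt) n : a != b -> forall (S : 'I_n -> {set L3}) (G : profile n -> alt),
  (forall i, #|S i| = 3) -> (forall i, orientS a b (S i)) ->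
  pairsS S G a b <= 3 ^ n * manS S G.
Proof.
move=> ab; elim: n => [|n IH] S G h3 hor.
  rewrite /pairsS big1 // => x _; rewrite big1 // => x' _.
  have -> : x' = x by apply/ffunP => -[].
  by case: eqP => // ->; rewrite (negbTE ab).
set S' := fun j => S (lift ord0 j).
set S0 := S ord0.
have h3' : forall j, #|S' j| = 3 by move=> j; exact: h3.
have hor' : forall j, orientS a b (S' j) by move=> j; exact: hor.
pose G' t := fun z : profile n => G (pcons t z).
pose M0 := \sum_(z | inS S' z) man0 S0 (fun t => G (pcons t z)).
have Hman : manS S G = M0 + \sum_(t in S0) manS S' (G' t).
  rewrite /manS big_ord_recl; congr (_ + _).
    rewrite split_cond /M0 exchange_big /=; apply: eq_bigr => z _.
    rewrite /man0 /row0; apply: eq_bigr => t _; apply: eq_bigr => y _.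
    by rewrite pcons0 upd_pcons0.
  rewrite [RHS]exchange_big /=; apply: eq_bigr => j _.
  rewrite split_cond; apply: eq_bigr => t _; apply: eq_bigr => z _.
  apply: eq_bigr => y _; by rewrite pconsS upd_pconsS.
have Hpairs : pairsS S G a b =
  \sum_(z | inS S' z) \sum_(w | inS S' w)
    ((\sum_(t in S0) (G (pcons t z) == a : nat)) *
     (\sum_(t in S0) (G (pcons t w) == b : nat))).
  rewrite /pairsS split_cond exchange_big /=; apply: eq_bigr => z _.
  rewrite [RHS](eq_bigr (fun w => \sum_(t in S0) \sum_(t' in S0)
     ((G (pcons t z) == a) * (G (pcons t' w) == b)))); last first.
    by move=> w _; rewrite big_distrlr.
  under eq_bigr => t _ do rewrite split_cond exchange_big.
  by rewrite exchange_big.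
rewrite Hman Hpairs.
pose K t z w := ((G (pcons t z) == a) * (G (pcons t w) == b)).
pose m z := man0 S0 (fun t => G (pcons t z)).
apply: (@leq_trans (\sum_(z | inS S' z) \sum_(w | inS S' w)
   (3 * \sum_(t in S0) K t z w + m z + m w))).
  apply: leq_sum => z _; apply: leq_sum => w _.
  exact: (fiber_ineq2 (fun t => G (pcons t z)) (fun t => G (pcons t w)) ab (h3 ord0) (hor ord0)).
have eK : \sum_(z | inS S' z) \sum_(w | inS S' w) \sum_(t in S0) K t z w =
          \sum_(t in S0) pairsS S' (G' t) a b.
  under eq_bigr => z _ do rewrite exchange_big.
  by rewrite /= exchange_big.
have e2 : \sum_(z | inS S' z) \sum_(w | inS S' w) (3 * \sum_(t in S0) K t z w + m z + m w)
   = 3 * (\sum_(t in S0) pairsS S' (G' t) a b) + 3 ^ n * M0 + 3 ^ n * M0.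
  rewrite -eK.
  under eq_bigr => z _ do rewrite big_split big_split /= (sum_constS _ h3') -big_distrr /=.
  rewrite big_split big_split /= -!big_distrr /=.
  congr (_ + _ + _).
  rewrite exchange_big /=; under eq_bigr => w _ do rewrite (sum_constS _ h3').
  by rewrite -big_distrr.
rewrite e2.
have hIH : \sum_(t in S0) pairsS S' (G' t) a b <= 3 ^ n * \sum_(t in S0) manS S' (G' t).
  rewrite big_distrr; apply: leq_sum => t _; exact: IH.
move: hIH; rewrite expnS.
set P := \sum_(t in S0) pairsS S' (G' t) a b.
set T := \sum_(t in S0) manS S' (G' t).
set e := 3 ^ n.
nia.
Qed.

Lemma card_set_sum (T : finType) (Q : pred T) : #|[set x | Q x]| = \sum_x (Q x : nat).
Proof.
rewrite -sum1_card big_mkcond [RHS]big_mkcond; apply: eq_bigr => x _.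
by rewrite inE; case: (Q x).
Qed.

Definition Sv n (a b : alt) (v : {ffun 'I_n -> bool}) : 'I_n -> {set L3} :=
  fun i => [set r : L3 | above r a b == v i].

Lemma inSv n a b (v : {ffun 'I_n -> bool}) (x : profile n) :
  inS (Sv a b v) x = (pairvec x a b == v).
Proof.
apply/forallP/eqP => [h | <- i].
  by apply/ffunP => i; have := h i; rewrite inE ffunE => /eqP.
by rewrite inE ffunE.
Qed.

Lemma Sv3 n a b (v : {ffun 'I_n -> bool}) : a != b -> forall i, #|Sv a b v i| = 3.
Proof. by move=> ab i; apply: card_half_bit. Qed.

Lemma Svor n a b (v : {ffun 'I_n -> bool}) : a != b -> forall i, orientS a b (Sv a b v i).
Proof.
move=> ab i; rewrite /orientS /Sv; case: (v i).
  by left => r; rewrite inE => /eqP.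
by right => r; rewrite inE => /eqP h; rewrite above_swap // h.
Qed.

Lemma main_nat n (F : SCF n) (a b : alt) : a != b ->
  \sum_(x : profile n)
     #|[set x' : profile n | (pairvec x' a b == pairvec x a b) && (F x == a) && (F x' == b)]|
  <= 3 ^ n * \sum_(i < n)
     #|[set p : profile n * L3 | above (p.1 i) (F (upd p.1 i p.2)) (F p.1)]|.
Proof.
move=> ab.
have eP : \sum_(x : profile n)
     #|[set x' : profile n | (pairvec x' a b == pairvec x a b) && (F x == a) && (F x' == b)]|
   = \sum_(v : {ffun 'I_n -> bool}) pairsS (Sv a b v) F a b.
  rewrite (partition_big (fun x : profile n => pairvec x a b) predT) //=.
  apply: eq_bigr => v _; rewrite /pairsS.
  rewrite [RHS](eq_bigl (fun x => pairvec x a b == v)); last by move=> x; rewrite inSv.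
  apply: eq_bigr => x /eqP hx; rewrite card_set_sum [RHS]big_mkcond /=.
  apply: eq_bigr => x' _; rewrite inSv hx.
  by case: (pairvec x' a b == v); case: (F x == a); case: (F x' == b).
have eM : forall i, #|[set p : profile n * L3 | above (p.1 i) (F (upd p.1 i p.2)) (F p.1)]|
    = \sum_(x : profile n) \sum_(y : L3) above (x i) (F (upd x i y)) (F x).
  move=> i; rewrite card_set_sum pair_big /=; by apply: eq_bigr => -[x y].
rewrite eP.
apply: (@leq_trans (\sum_(v : {ffun 'I_n -> bool}) 3 ^ n * manS (Sv a b v) F)).
  by apply: leq_sum => v _; apply: core => //; [exact: Sv3 | exact: Svor].
rewrite -big_distrr /= leq_mul2l; apply/orP; right.
rewrite /manS exchange_big /=; apply: leq_sum => i _; rewrite eM.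
rewrite [X in _ <= X](partition_big (fun x : profile n => pairvec x a b) predT) //=.
apply: leq_sum => v _.
under eq_bigl => x do rewrite inSv.
apply: leq_sum => x _.
by rewrite [X in _ <= X](bigID (mem (Sv a b v i))) /= leq_addr.
Qed.

Lemma cardP n : #|profile n| = (6 ^ n)%N.
Proof. by rewrite card_ffun card_L3 card_ord. Qed.

Lemma cardC n (a b : alt) (x : profile n) : a != b ->
  #|[set x' : profile n | pairvec x' a b == pairvec x a b]| = (3 ^ n)%N.
Proof.
move=> ab; rewrite card_set_sum -(cardS (Sv3 (pairvec x a b) ab)) [RHS]big_mkcond /=.
by apply: eq_bigr => x' _; rewrite inSv; case: (_ == _).
Qed.

Local Open Scope ring_scope.

Theorem lemma3p2 (n : nat) (F : SCF n) (a b : alt) :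
  a != b -> Mab F a b <= 6%:R * \sum_(i < n) Mi F i.
Proof.
move=> ab.
have h := main_nat F ab.
rewrite /Mab /Mi.
under eq_bigr => x _ do rewrite (cardC x ab) cardP.
under [X in _ <= _ * X]eq_bigr => i _ do rewrite cardP card_L3.
rewrite -mulr_sumr -mulr_sumr -natr_sum -mulr_suml -natr_sum.
set P := (\sum_(x : profile n) _)%N in h *.
set M := (\sum_(i < n) _)%N in h *.
set u := (6 ^ n)%:R : rat.
set w := (3 ^ n)%:R : rat.
have u0 : u != 0 by rewrite pnatr_eq0 expn_eq0.
have w0 : w != 0 by rewrite pnatr_eq0 expn_eq0.
have hr : (P%:R : rat) <= w * M%:R by rewrite -natrM ler_nat.
apply: (@le_trans _ _ (u^-1 * (w^-1 * (w * M%:R)))).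
  apply: ler_wpM2l; first by rewrite invr_ge0 ler0n.
  apply: ler_wpM2l; first by rewrite invr_ge0 ler0n.
  exact: hr.
rewrite le_eqVlt; apply/orP; left; apply/eqP.
field.
by rewrite u0 w0.
Qed.
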